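(* Let $\mathbb{M}$ be $d$-dimensional Minkowski spacetime ($d\ge 2$) with points written $(t,\vec x)$, $t\in\mathbb{R}$, $\vec x\in\mathbb{R}^{d-1}$. Let $\mathcal{H}$ be a Hilbert space, let $U$ be a unitary representation of the additive group $\mathbb{R}^{d-1}$ on $\mathcal{H}$, and let $\hat\psi:\mathbb{M}\to\mathcal{B}(\mathcal{H})$ and $\hat\pi:\mathbb{M}\to\mathcal{B}(\mathcal{H})$ be such that (1) $U$ is weakly continuous; (2) $U(\vec y)\hat\pi(t,\vec x)U(\vec y)^\dagger=\hat\pi(t,\vec x+\vec y)$ for all $\vec x,\vec y\in\mathbb{R}^{d-1}$ and all $t\in\mathbb{R}$. Then for every $t\in\mathbb{R}$: $[\hat\psi(t,\vec x),\hat\pi(t,\vec y)]=0$ for all $\vec x\neq\vec y\in\mathbb{R}^{d-1}$ if and only if $[\hat\psi(t,\vec x),\hat\pi(t,\vec y)]=0$ for all $\vec x,\vec y\in\mathbb{R}^{d-1}$; and $\{\hat\psi(t,\vec x),\hat\pi(t,\vec y)\}=0$ for all $\vec x\neq\vec y\in\mathbb{R}^{d-1}$ if and only if $\{\hat\psi(t,\vec x),\hat\pi(t,\vec y)\}=0$ for all $\vec x,\vec y\in\mathbb{R}^{d-1}$.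
   Context: $\mathcal{B}(\mathcal{H})$ denotes the bounded operators on $\mathcal{H}$. $[A,B]=AB-BA$, $\{A,B\}=AB+BA$. *)

(* Defs.v *)
From HB Require Import structures.
From mathcomp Require Import all_boot all_order all_algebra.
From mathcomp Require Import all_classical all_reals all_analysis.
From mathcomp Require Import complex.
Import Order.TTheory GRing.Theory Num.Theory.
Import numFieldNormedType.Exports.
Set Implicit Arguments. Unset Strict Implicit. Unset Printing Implicit Defensive.
Local Open Scope ring_scope.

(* The complex numbers over a real type R, seen as a numFieldType
   (so that MathComp-Analysis equips them with their usual topology). *)
Definition Cx (R : realType) : numFieldType := R[i].

Section Hilbert.
Variable R : realType.
Variable H : lmodType (Cx R).

(* Physics convention: the inner product <a, b> is linear in the second
   argument and conjugate-linear in the first. *)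
Record is_inner_product (ip : H -> H -> Cx R) : Prop := {
  ip_linear : forall (a : H) (c : Cx R) (u v : H),
      ip a (c *: u + v) = c * ip a u + ip a v;
  ip_conj_sym : forall u v : H, ip u v = conjc (ip v u);
  ip_pos : forall v : H, 0 <= ip v v;
  ip_definite : forall v : H, ip v v = 0 -> v = 0
}.

Definition ipnorm (ip : H -> H -> Cx R) (v : H) : R :=
  Num.sqrt (complex.Re (ip v v)).

Definition ip_complete (ip : H -> H -> Cx R) : Prop :=
  forall u : nat -> H,
    (forall e : R, 0 < e -> exists N : nat, forall m n : nat,
        (N <= m)%N -> (N <= n)%N -> ipnorm ip (u m - u n) < e) ->
    exists l : H, forall e : R, 0 < e -> exists N : nat, forall n : nat,
        (N <= n)%N -> ipnorm ip (u n - l) < e.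

Definition is_hilbert (ip : H -> H -> Cx R) : Prop :=
  is_inner_product ip /\ ip_complete ip.

Definition bounded_op (ip : H -> H -> Cx R) (T : H -> H) : Prop :=
  (forall (c : Cx R) (u v : H), T (c *: u + v) = c *: T u + T v) /\
  exists M : R, forall v : H, ipnorm ip (T v) <= M * ipnorm ip v.

Definition adjoint_of (ip : H -> H -> Cx R) (T S : H -> H) : Prop :=
  forall a b : H, ip (T a) b = ip a (S b).

Definition unitary (ip : H -> H -> Cx R) (T : H -> H) : Prop :=
  bounded_op ip T /\
  exists S : H -> H, adjoint_of ip T S /\
    (forall v, T (S v) = v) /\ (forall v, S (T v) = v).

Definition unitary_rep (n : nat) (ip : H -> H -> Cx R)
    (U : 'rV[R]_n -> H -> H) : Prop :=
  (forall y, unitary ip (U y)) /\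
  (forall v, U 0 v = v) /\
  (forall y z v, U (y + z) v = U y (U z v)).

Definition weakly_continuous (n : nat) (ip : H -> H -> Cx R)
    (U : 'rV[R]_n -> H -> H) : Prop :=
  forall a b : H, continuous (fun y : 'rV[R]_n => ip a (U y b)).

Definition comm (A B : H -> H) : H -> H := fun v => A (B v) - B (A v).
Definition acomm (A B : H -> H) : H -> H := fun v => A (B v) + B (A v).

End Hilbert.

Definition Mink (R : realType) (d : nat) : Type := (R * 'rV[R]_(d.-1))%type.

(* Main.v *)
Require Import Defs.
From HB Require Import structures.
From mathcomp Require Import all_boot all_order all_algebra.
From mathcomp Require Import all_classical all_reals all_analysis.
From mathcomp Require Import complex.
From mathcomp Require Import ring lra.
Import Order.TTheory GRing.Theory Num.Theory.
Import numFieldNormedType.Exports.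
Local Open Scope ring_scope.

Section Aux.
Variable R : realType.
Variable H : lmodType (Cx R).
Variable ip : H -> H -> Cx R.
Hypothesis hI : is_inner_product ip.

Definition q (v : H) : R := complex.Re (ip v v).
Definition pp (u v : H) : R := complex.Re (ip u v).

Lemma ReD (x y : Cx R) : complex.Re (x + y) = complex.Re x + complex.Re y.
Proof. by case: x y => [? ?] [? ?]. Qed.
Lemma ReN (x : Cx R) : complex.Re (- x) = - complex.Re x.
Proof. by case: x => [? ?]. Qed.
Lemma ReJ (x : Cx R) : complex.Re (conjc x) = complex.Re x.
Proof. by case: x => [? ?]. Qed.

Lemma ip0 a : ip a 0 = 0.
Proof.
have h := ip_linear hI a 1 0 0.
rewrite scaler0 addr0 mul1r in h.
by apply: (addrI (ip a 0)); rewrite addr0 -h.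
Qed.

Lemma ipD a u v : ip a (u + v) = ip a u + ip a v.
Proof. by have := ip_linear hI a 1 u v; rewrite scale1r mul1r. Qed.

Lemma ipN a u : ip a (- u) = - ip a u.
Proof.
by have := ip_linear hI a (-1) u 0; rewrite scaleN1r addr0 ip0 addr0 mulN1r.
Qed.

Lemma ppC u v : pp u v = pp v u.
Proof. by rewrite /pp (ip_conj_sym hI) ReJ. Qed.
Lemma ppD2 a u v : pp a (u + v) = pp a u + pp a v.
Proof. by rewrite /pp ipD ReD. Qed.
Lemma ppN2 a u : pp a (- u) = - pp a u.
Proof. by rewrite /pp ipN ReN. Qed.
Lemma ppD1 a u v : pp (u + v) a = pp u a + pp v a.
Proof. by rewrite ppC ppD2 !(ppC a). Qed.
Lemma ppN1 a u : pp (- u) a = - pp u a.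
Proof. by rewrite ppC ppN2 ppC. Qed.

Lemma q_ge0 v : 0 <= q v.
Proof. by have := ip_pos hI v; rewrite lecE => /andP[_]. Qed.

Lemma q_eq0 v : q v = 0 -> v = 0.
Proof.
move=> h; apply: (ip_definite hI).
have hIm := ger0_Im (ip_pos hI v).
move: h hIm; rewrite /q; case: (ip v v) => a b /= -> ->; by [].
Qed.

Lemma qN v : q (- v) = q v.
Proof. by rewrite /q -/(pp _ _) ppN1 ppN2 opprK. Qed.

Lemma q_add a b : q (a + b) <= 2 * q a + 2 * q b.
Proof.
have h1 := q_ge0 (a - b).
move: h1; rewrite /q -!/(pp _ _) !(ppD1, ppD2, ppN1, ppN2) (ppC b a).
lra.
Qed.

Lemma q_sub a b : q (a - b) <= 2 * q a + 2 * q b.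
Proof. by rewrite -(qN b); apply: q_add. Qed.

Lemma q_subE a b : q (a - b) = q a + q b - 2 * pp b a.
Proof. rewrite /q -!/(pp _ _) !(ppD1, ppD2, ppN1, ppN2) (ppC a b); lra. Qed.

Lemma bounded_q T : bounded_op ip T ->
  exists K : R, 0 <= K /\ forall v, q (T v) <= K * q v.
Proof.
move=> [_ [M hM]]; exists (M ^+ 2); split; first exact: sqr_ge0.
move=> v; have := hM v; rewrite /ipnorm -/(q _) -/(q _).
have ha := q_ge0 (T v); have hb := q_ge0 v.
have ea := sqr_sqrtr ha; have eb := sqr_sqrtr hb.
have sa := sqrtr_ge0 (q (T v)); have sb := sqrtr_ge0 (q v).
move: ea eb sa sb.
set a := Num.sqrt (q (T v)); set b := Num.sqrt (q v) => ea eb sa sb hab.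
rewrite -ea -eb.
nra.
Qed.

Lemma lin_sub T : bounded_op ip T -> forall a b, T (a - b) = T a - T b.
Proof.
move=> [hl _] a b; have := hl (-1) b a.
by rewrite scaleN1r !scaleN1r addrC [in X in _ = X -> _]addrC.
Qed.

Lemma lin_add T : bounded_op ip T -> forall a b, T (a + b) = T a + T b.
Proof. by move=> [hl _] a b; have := hl 1 a b; rewrite !scale1r. Qed.

Lemma unitary_isom T : unitary ip T -> forall a b, ip (T a) (T b) = ip a b.
Proof. by move=> [_ [S [hS [h1 h2]]]] a b; rewrite hS h2. Qed.

Lemma unitary_q T : unitary ip T -> forall a, q (T a) = q a.
Proof. by move=> hT a; rewrite /q unitary_isom. Qed.

Lemma Re_lt_norm (c : Cx R) (r : R) : `|c| < r%:C%C -> complex.Re c < r.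
Proof.
rewrite normc_def ltcR => h; apply: le_lt_trans h.
apply: le_trans (ler_norm (complex.Re c)) _.
rewrite -sqrtr_sqr; apply: ler_wsqrtr.
by rewrite lerDl sqr_ge0.
Qed.


Section Main.
Variable n : nat.
Variable U : 'rV[R]_n -> H -> H.
Hypothesis hU : unitary_rep ip U.
Hypothesis hc : weakly_continuous ip U.

Lemma U_adj z : adjoint_of ip (U z) (U (- z)).
Proof.
move=> a b; have [hu [h0 hm]] := hU.
by rewrite -{1}(h0 b) -(subrr z) hm (@unitary_isom _ (hu z)).
Qed.

Lemma strong w e : 0 < e -> \forall z \near (0 : 'rV[R]_n), q (U z w - w) < e.
Proof.
move=> e0; have [hu [h0 hm]] := hU.
have := hc w w 0; move=> /cvgr_dist_lt /(_ (e / 2)%:C%C) H1.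
have /H1 : 0 < (e / 2)%:C%C :> Cx R.
  by rewrite (_ : (0 : Cx R) = 0%:C%C) // ltcR divr_gt0.
apply: filterS => z /Re_lt_norm; rewrite h0 ReD ReN -/(q _) -/(pp _ _) => hz.
rewrite q_subE (@unitary_q _ (hu z)); lra.
Qed.

Lemma D_bound (B : H -> H) (bB : bounded_op ip B) KB
  (hKB : forall v, q (B v) <= KB * q v) z u :
  q (U z (B (U (- z) u)) - B u) <= 2 * KB * q (U z u - u) + 2 * q (U z (B u) - B u).
Proof.
have [hu [h0 hm]] := hU.
have bU : bounded_op ip (U z) by case: (hu z).
have -> : U z (B (U (- z) u)) - B u =
  U z (B (U (- z) u) - B u) + (U z (B u) - B u).
  by rewrite (@lin_sub _ bU) addrA subrK.
apply: le_trans (q_add _ _) _.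
rewrite (@unitary_q _ (hu z)) -(@lin_sub _ bB).
have : q (B (U (- z) u - u)) <= KB * q (U z u - u).
  apply: le_trans (hKB _) _.
  rewrite -(@unitary_q _ (hu z)) (@lin_sub _ bU) -hm subrr h0 -qN opprB.
  by [].
lra.
Qed.

Lemma exists_nz (P : 'rV[R]_n -> Prop) : (0 < n)%N ->
  (\forall z \near (0 : 'rV[R]_n), P z) -> exists z, z != 0 /\ P z.
Proof.
move=> n0 /nbhs_norm0P [r /= r0 hr].
pose i := Ordinal n0.
pose c : 'rV[R]_n := const_mx 1.
have c0 : c != 0.
  apply/negP => /eqP h; have := congr1 (fun M : 'rV[R]_n => M 0 i) h.
  by rewrite !mxE => /eqP; rewrite oner_eq0.
have nc : 0 < `|c| by rewrite normr_gt0.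
exists ((r / (2 * `|c|)) *: c); split.
  rewrite scaler_eq0 negb_or c0 andbT mulf_neq0 ?invr_eq0 ?mulf_neq0 //.
  - by rewrite gt_eqF.
  - by rewrite gt_eqF.
apply: hr => /=; rewrite normrZ ger0_norm; last first.
  by rewrite divr_ge0 // ?ltW // mulr_gt0.
have -> : r / (2 * `|c|) * `|c| = r / 2.
  by field; rewrite gt_eqF.
lra.
Qed.

Lemma core (A B : H -> H) (bA : bounded_op ip A) (bB : bounded_op ip B)
  (w v : H) (n0 : (0 < n)%N)
  (hw : forall z : 'rV[R]_n, z != 0 -> q w <=
     2 * q (A (U z (B (U (- z) v)) - B v)) +
     2 * q (U z (B (U (- z) (A v))) - B (A v))) : w = 0.
Proof.
have [KA [KA0 hKA]] := @bounded_q _ bA; have [KB [KB0 hKB]] := @bounded_q _ bB.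
set C := 4 * KA * KB + 4 * KA + 4 * KB + 4.
have C0 : 0 < C by have := mulr_ge0 KA0 KB0; rewrite /C; lra.
have hd : forall d, 0 < d -> q w <= C * d.
  move=> d d0.
  have N1 := strong v d d0; have N2 := strong (B v) d d0.
  have N3 := strong (A v) d d0; have N4 := strong (B (A v)) d d0.
  have [z [nz [[h1 h2] [h3 h4]]]] :=
    @exists_nz _ n0 (filterI (filterI N1 N2) (filterI N3 N4)).
  have := hw z nz.
  have d1 := @D_bound _ bB _ hKB z v; have d2 := @D_bound _ bB _ hKB z (A v).
  have e1 := hKA (U z (B (U (-z) v)) - B v).
  have k1 := ler_wpM2l KB0 (ltW h1); have k3 := ler_wpM2l KB0 (ltW h3).
  have y1 : q (U z (B (U (- z) v)) - B v) <= 2 * KB * d + 2 * d by lra.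
  have k2 := ler_wpM2l KA0 y1.
  rewrite /C; lra.
have two0 : (0:R) < 2 by lra.
have hle : q w <= 0.
  case: (lerP (q w) 0) => // hpos; exfalso.
  have := hd (q w / (2 * C)) (divr_gt0 hpos (mulr_gt0 two0 C0)).
  have -> : C * (q w / (2 * C)) = q w / 2.
    by field; rewrite gt_eqF.
  lra.
apply: q_eq0; apply/eqP; rewrite eq_le hle q_ge0.
by [].
Qed.

End Main.
End Aux.

Theorem corollary1 (R : realType) (d : nat) (hd : (2 <= d)%N)
  (H : lmodType (Cx R)) (ip : H -> H -> Cx R) (hH : is_hilbert ip)
  (U : 'rV[R]_(d.-1) -> H -> H) (hU : unitary_rep ip U)
  (psi pi : Mink R d -> H -> H)
  (hpsi : forall p, bounded_op ip (psi p))
  (hpi : forall p, bounded_op ip (pi p))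
  (h1 : weakly_continuous ip U)
  (h2 : forall (y x : 'rV[R]_(d.-1)) (t : R) (Ud : H -> H),
      adjoint_of ip (U y) Ud ->
      forall v : H, U y (pi (t, x) (Ud v)) = pi (t, x + y) v) :
  forall t : R,
    ((forall x y : 'rV[R]_(d.-1), x != y ->
        forall v : H, comm (psi (t, x)) (pi (t, y)) v = 0) <->
     (forall x y : 'rV[R]_(d.-1),
        forall v : H, comm (psi (t, x)) (pi (t, y)) v = 0)) /\
    ((forall x y : 'rV[R]_(d.-1), x != y ->
        forall v : H, acomm (psi (t, x)) (pi (t, y)) v = 0) <->
     (forall x y : 'rV[R]_(d.-1),
        forall v : H, acomm (psi (t, x)) (pi (t, y)) v = 0)).
Proof.
move=> t; have hI := hH.1.
have n0 : (0 < d.-1)%N by move: hd; case: d {U hU psi pi hpsi hpi h1 h2} => [|[|d0]].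
have hxz : forall (x z : 'rV[R]_(d.-1)), z != 0 -> x + z != x.
  by move=> x z; apply: contra => /eqP h; rewrite -(addKr x z) h addNr.
have hrw : forall x z u, U z (pi (t, x) (U (- z) u)) = pi (t, x + z) u.
  by move=> x z u; apply: h2; apply: U_adj.
split; split; [| by move=> h x y _ v; apply: h| | by move=> h x y _ v; apply: h].
- move=> hne x y v; have [<-|nxy] := eqVneq x y; last by apply: hne.
  rewrite /comm.
  apply: (@core _ _ _ hI _ _ hU h1 _ _ (hpsi (t, x)) (hpi (t, x)) _ v n0) => z nz.
  rewrite !hrw.
  have hz0 : x != x + z by rewrite eq_sym hxz.
  have := hne x (x + z) hz0 v.
  rewrite /comm => /subr0_eq hz.
  set P := psi (t, x) in hz *; set B := pi (t, x) in hz *; set B' := pi (t, x + z) in hz *.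
  have -> : P (B v) - B (P v) = - P (B' v - B v) + (B' (P v) - B (P v)).
    by rewrite (@lin_sub _ _ _ P (hpsi (t, x))) hz opprB addrA subrK.
  apply: le_trans (@q_add _ _ _ hI _ _) _.
  by rewrite (@qN _ _ _ hI).
- move=> hne x y v; have [<-|nxy] := eqVneq x y; last by apply: hne.
  rewrite /acomm.
  apply: (@core _ _ _ hI _ _ hU h1 _ _ (hpsi (t, x)) (hpi (t, x)) _ v n0) => z nz.
  rewrite !hrw.
  have hz0 : x != x + z by rewrite eq_sym hxz.
  have := hne x (x + z) hz0 v.
  rewrite /acomm => /eqP; rewrite addr_eq0 => /eqP hz.
  set P := psi (t, x) in hz *; set B := pi (t, x) in hz *; set B' := pi (t, x + z) in hz *.
  have -> : P (B v) + B (P v) = - (B' (P v) - B (P v)) - P (B' v - B v).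
    rewrite (@lin_sub _ _ _ P (hpsi (t, x))) hz !opprB opprK addrC -addrA.
    by congr (_ + _); rewrite addrCA addNr addr0.
  apply: le_trans (@q_sub _ _ _ hI _ _) _.
  rewrite (@qN _ _ _ hI) addrC.
  by [].
Qed.
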